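(* For every $\beta>0$, the origin is the unique globally asymptotically stable equilibrium of the ODE $\dot x=h(x)$ on $\mathbb R^n\times\mathbb R^n$, where $$h(x_1,x_2)=\begin{bmatrix}-Dx_1+\gamma DPM(x_2)\\ \beta Dx_1-\beta Dx_2\end{bmatrix}.$$
   Context: Finite MDP with states $\mathcal S$, actions $\mathcal A$, kernel $P$, discount $\gamma\in[0,1)$; $n=|\mathcal S||\mathcal A|$. $D$ is the diagonal matrix of a probability distribution $d$ on $\mathcal S\times\mathcal A$ with $d(s,a)>0$ for all $(s,a)$; $P$ is the $n\times|\mathcal S|$ matrix with row $(s,a)$ equal to $P(\cdot\mid s,a)$; $M(Q)(s)=\max_aQ(s,a)$. Globally asymptotically stable means Lyapunov stable and every solution converges to it. *)

(* Defs.v *)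
From HB Require Import structures.
From mathcomp Require Import all_boot all_order all_algebra.
From mathcomp Require Import all_classical all_reals all_analysis.
Set Implicit Arguments. Unset Strict Implicit. Unset Printing Implicit Defensive.
Import Order.TTheory GRing.Theory Num.Theory.
Import numFieldNormedType.Exports.
Local Open Scope classical_set_scope.
Local Open Scope ring_scope.

Section MDP.
Variables (R : realType) (S A : finType).

(* M(Q)(s) = max_a Q(s,a)  (0 if the action set is empty, a vacuous case) *)
Definition Mmax (Q : S * A -> R) (s : S) : R :=
  match [pick a : A] with
  | Some a0 => \big[Num.max/Q (s, a0)]_(a : A) Q (s, a)
  | None => 0
  end.

Definition Pmul (P : S * A -> S -> R) (v : S -> R) (i : S * A) : R :=
  \sum_(s' : S) P i s' * v s'.

Definition h1 (P : S * A -> S -> R) (d : S * A -> R) (gamma : R)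
    (x1 x2 : S * A -> R) (i : S * A) : R :=
  - (d i * x1 i) + gamma * (d i * Pmul P (Mmax x2) i).

Definition h2 (d : S * A -> R) (beta : R)
    (x1 x2 : S * A -> R) (i : S * A) : R :=
  beta * (d i * x1 i) - beta * (d i * x2 i).

Definition nrm2 (x1 x2 : S * A -> R) : R :=
  \big[Num.max/0]_(i : S * A) Num.max `|x1 i| `|x2 i|.

Definition is_solution (P : S * A -> S -> R) (d : S * A -> R) (gamma beta : R)
    (x1 x2 : R -> S * A -> R) : Prop :=
  (forall i, {within `[0, +oo[, continuous (fun t => x1 t i)}) /\
  (forall i, {within `[0, +oo[, continuous (fun t => x2 t i)}) /\
  (forall t : R, 0 < t -> forall i,
      is_derive t 1 (fun u => x1 u i) (h1 P d gamma (x1 t) (x2 t) i) /\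
      is_derive t 1 (fun u => x2 u i) (h2 d beta (x1 t) (x2 t) i)).

Definition is_equilibrium P d gamma beta (z1 z2 : S * A -> R) : Prop :=
  (forall i, h1 P d gamma z1 z2 i = 0) /\ (forall i, h2 d beta z1 z2 i = 0).

Definition origin_GAS P d gamma beta : Prop :=
  (forall eps : R, 0 < eps -> exists2 delta : R, 0 < delta &
     forall x1 x2, is_solution P d gamma beta x1 x2 ->
       nrm2 (x1 0) (x2 0) < delta ->
       forall t : R, 0 <= t -> nrm2 (x1 t) (x2 t) < eps) /\
  (forall x1 x2, is_solution P d gamma beta x1 x2 ->
     (fun t => nrm2 (x1 t) (x2 t)) @ +oo --> (0 : R)).

End MDP.

(* Main.v *)
Require Import Defs.
From HB Require Import structures.
From mathcomp Require Import all_boot all_order all_algebra.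
From mathcomp Require Import all_classical all_reals all_analysis.
From mathcomp Require Import lra.
Import Order.TTheory GRing.Theory Num.Theory.
Import numFieldNormedType.Exports.
Local Open Scope classical_set_scope.
Local Open Scope ring_scope.

Section H.
Variable R : realType.

Lemma within_gt_near (f : R -> R) T z : {within `[0,+oo[, continuous f} -> 0 <= T ->
  z < f T -> \forall s \near T, 0 <= s -> z < f s.
Proof.
move=> cf T0 zf.
have := (subspace_continuousP _ _).1 cf T.
rewrite /= in_itv /= andbT => /(_ T0) /cvgr_gt /(_ _ zf).
rewrite near_withinE; apply: filterS => s H s0; apply: H.
by rewrite /= in_itv /= andbT.
Qed.

Lemma within_lt_near (f : R -> R) T z : {within `[0,+oo[, continuous f} -> 0 <= T ->
  f T < z -> \forall s \near T, 0 <= s -> f s < z.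
Proof.
move=> cf T0 zf.
have := (subspace_continuousP _ _).1 cf T.
rewrite /= in_itv /= andbT => /(_ T0) /cvgr_lt /(_ _ zf).
rewrite near_withinE; apply: filterS => s H s0; apply: H.
by rewrite /= in_itv /= andbT.
Qed.

Lemma near_ball (T : R) (P : R -> Prop) : (\forall s \near T, P s) ->
  exists2 e : R, 0 < e & forall s, `|T - s| < e -> P s.
Proof. by move=> /nbhs_ballP [e e0 He]; exists e. Qed.
Arguments near_ball {T P}.

Lemma small_pos (a b : R) : 0 < a -> 0 < b -> exists m : R, [/\ 0 < m, m <= a & m <= b].
Proof.
move=> a0 b0; case: (leP a b) => ab; first by exists a; split.
by exists b; split => //; apply: ltW.
Qed.

Arguments small_pos {a b}.

Lemma first_hit (I : finType) (g : I -> R -> R) :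
  (forall k, {within `[0,+oo[, continuous (g k)}) ->
  (forall k, 0 < g k 0) ->
  (forall t, 0 < t -> (forall k, 0 <= g k t) -> forall j, g j t = 0 ->
     exists2 d : R, 0 < d & forall s, t - d < s -> s < t -> g j s < 0) ->
  forall t, 0 <= t -> forall k, 0 < g k t.
Proof.
move=> gc g0 H t0 t0ge k0; rewrite ltNge; apply/negP => gk0.
pose E := [set t | 0 <= t /\ exists k, g k t <= 0].
have En : nonempty E by exists t0; split => //; exists k0.
have El : lbound E 0 by move=> y [].
have hE : has_inf E by split => //; exists 0.
pose T := inf E.
have T0 : 0 <= T := lb_le_inf En El.
have TleE : forall y, E y -> T <= y by move=> y Ey; apply: (ge_inf hE.2).
have below : forall s, 0 <= s -> s < T -> forall k, 0 < g k s.
  move=> s s0 sT k; rewrite ltNge; apply/negP => gks.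
  by have := TleE s (conj s0 (ex_intro _ k gks)); rewrite leNgt sT.
have TE : E T.
  apply: contrapT => nET.
  have pos : forall k, 0 < g k T.
    move=> k; rewrite ltNge; apply/negP => gk; apply: nET; split => //; exists k.
    exact: gk.
  have Hn : \forall s \near T, forall k, 0 <= s -> 0 < g k s.
    apply: (@filter_forall R I (fun k s => 0 <= s -> 0 < g k s) (nbhs T) (nbhs_filter T)) => k.
    exact: within_gt_near.
  have [e e0 He] := near_ball Hn.
  have : T + e / 2 <= T.
    apply: lb_le_inf => // y [y0 [k gky]].
    rewrite leNgt; apply/negP => yl.
    have Ty := TleE y (conj y0 (ex_intro _ k gky)).
    have : `|T - y| < e by rewrite distrC ger0_norm; lra.
    move=> /He /(_ k y0); lra.
  lra.
case: TE => _ [k gkT].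
have Tpos : 0 < T.
  rewrite lt_neqAle T0 andbT; apply/negP => /eqP T0'.
  by have := g0 k; rewrite T0'; lra.
have Tge : forall k, 0 <= g k T.
  move=> j; rewrite leNgt; apply/negP => gj.
  have [e e0 He] := near_ball (@within_lt_near (g j) T 0 (gc j) T0 gj).
  have [m [m0 mT me]] := small_pos Tpos e0.
  have := He (T - m / 2).
  have -> : T - (T - m / 2) = m / 2 by lra.
  rewrite ger0_norm; last lra.
  move=> /(_ ltac:(lra) ltac:(lra)).
  have := below (T - m / 2) ltac:(lra) ltac:(lra) j; lra.
have gkT0 : g k T = 0 by apply/eqP; rewrite eq_le gkT Tge.
have [d d0 Hd] := H T Tpos Tge k gkT0.
have [m [m0 mT md]] := small_pos Tpos d0.
have := Hd (T - m / 2) ltac:(lra) ltac:(lra).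
have := below (T - m / 2) ltac:(lra) ltac:(lra) k; lra.
Qed.
Lemma deriv_pos_left (f : R -> R) (t l : R) : is_derive t 1 f l -> 0 < l -> f t <= 0 ->
  exists2 d : R, 0 < d & forall s, t - d < s -> s < t -> f s < 0.
Proof.
move=> [dd dv] l0 ft.
have Hc : (fun h : R => h^-1 *: ((f \o shift t) (h *: 1) - f t)) @ 0^' --> l.
  by rewrite -dv; exact: dd.
have l2 : l / 2 < l by lra.
have := cvgr_gt _ Hc _ l2.
rewrite near_withinE => Hn.
have [e e0 He] := Hn.
exists e => // s s1 s2.
have := He (s - t).
rewrite /ball /= sub0r normrN ltr0_norm; last lra.
move=> /(_ ltac:(lra)).
have hn : s - t != 0 by apply/eqP; lra.
move=> /(_ hn) /=.
rewrite /shift /= -[X in f (X + t)]/((s - t) * 1) mulr1 subrK.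
have hneg : (s - t)^-1 < 0 by rewrite invr_lt0; lra.
rewrite -[X in _ < X]/((s - t)^-1 * (f s - f t)) => Hq.
have : 0 < - (s - t)^-1 * (f t - f s) by rewrite mulNr -mulrN opprB; lra.
rewrite pmulr_rgt0; last by rewrite oppr_gt0.
lra.
Qed.
Lemma derB (K k t : R) : is_derive t 1 (fun u => K * expR (- (k * u))) (K * (expR (- (k * t)) * - k)).
Proof.
have h0 := is_deriveZ k (is_derive_id t (1:R)).
have h1 := is_deriveN h0.
have h2 := is_derive1_comp (is_derive_expR _) h1.
have h3 := is_deriveZ K h2.
have h4 : is_derive t 1 (fun u => K * expR (- (k * u))) (K *: (expR ((- (k \*: id)) t) * - (k *: 1))) := h3.
suff -> : K * (expR (- (k * t)) * - k) = K *: (expR ((- (k \*: id)) t) * - (k *: 1)) by exact: h4.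
by rewrite /GRing.scale /= mulr1.
Qed.
End H.

Section M.
Variables (R : realType) (S A : finType).

Lemma Mmax_bound (Q : S * A -> R) (m : R) s : 0 <= m -> (forall i, `|Q i| <= m) ->
  `|Mmax Q s| <= m.
Proof.
move=> m0 HQ; rewrite /Mmax; case: pickP => [a0 _|_]; last by rewrite normr0.
elim/big_ind: _ => // x y hx hy.
by rewrite maxEle; case: ifP.
Qed.

Lemma Mmax0 s : Mmax (fun _ : S * A => (0:R)) s = 0.
Proof.
apply/eqP; rewrite -normr_le0; apply: Mmax_bound => // i; by rewrite normr0.
Qed.

Lemma Pmul_bound (P : S * A -> S -> R) (v : S -> R) (m : R) i :
  (forall i s', 0 <= P i s') -> (forall i, \sum_(s' : S) P i s' = 1) ->
  (forall s, `|v s| <= m) -> `|Pmul P v i| <= m.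
Proof.
move=> HP0 HP1 Hv; rewrite /Pmul.
apply: (le_trans (ler_norm_sum _ _ _)).
apply: (@le_trans _ _ (\sum_(s' : S) P i s' * m)).
  apply: ler_sum => s' _; rewrite normrM ger0_norm //.
  exact: ler_wpM2l.
by rewrite -mulr_suml HP1 mul1r.
Qed.

Lemma nrm2_ge1 (x1 x2 : S * A -> R) i : `|x1 i| <= nrm2 x1 x2.
Proof.
apply: le_trans (le_bigmax _ _ i); by rewrite le_max lexx.
Qed.

Lemma nrm2_ge2 (x1 x2 : S * A -> R) i : `|x2 i| <= nrm2 x1 x2.
Proof.
apply: le_trans (le_bigmax _ _ i); by rewrite le_max lexx orbT.
Qed.

Lemma nrm2_le (x1 x2 : S * A -> R) (m : R) : 0 <= m ->
  (forall i, `|x1 i| <= m) -> (forall i, `|x2 i| <= m) -> nrm2 x1 x2 <= m.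
Proof.
move=> m0 h1 h2; apply: bigmax_le => // i _; by rewrite ge_max h1 h2.
Qed.

Lemma nrm2_ge0 (x1 x2 : S * A -> R) : 0 <= nrm2 x1 x2.
Proof. by rewrite /nrm2; elim/big_ind: _ => // x y hx hy; rewrite le_max hx. Qed.

Lemma dmin_spec (d : S * A -> R) : (forall i, 0 < d i) ->
  exists2 m : R, 0 < m & forall i, m <= d i.
Proof.
move=> Hd; exists (\big[Num.min/1]_i d i).
  by elim/big_ind: _ => // x y hx hy; rewrite lt_min hx.
by move=> i; apply: bigmin_le.
Qed.
End M.

Arguments nrm2_ge0 {R S A}.
Section D.
Variable R : realType.

Lemma contB (K k : R) : continuous (fun u : R => K * expR (- (k * u))).
Proof.
move=> u; apply: differentiable_continuous.
apply/derivable1_diffP.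
by case: (@derB R K k u).
Qed.

Lemma wcc (b x : R -> R) : continuous b -> {within `[0,+oo[, continuous x} ->
  {within `[0,+oo[, continuous (fun u => b u - `|x u|)}.
Proof.
move=> cb cx; apply/subspace_continuousP => s s0.
apply: (@cvgB _ _ _ _ _ b (fun u => `|x u|)).
  apply: cvg_within_filter; exact: cb.
apply: cvg_norm; exact: (subspace_continuousP _ _).1 cx s s0.
Qed.
End D.

Section Decay.
Variables (R : realType) (S A : finType).
Variables (P : S * A -> S -> R) (d : S * A -> R) (gamma beta : R).
Hypotheses (HP0 : forall i s', 0 <= P i s')
    (HP1 : forall i, \sum_(s' : S) P i s' = 1)
    (Hd0 : forall i, 0 < d i)
    (Hg0 : 0 <= gamma) (Hg1 : gamma < 1) (Hb : 0 < beta).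

Lemma decay : exists2 k : R, 0 < k & forall x1 x2,
  is_solution P d gamma beta x1 x2 -> forall K : R, 0 < K ->
  (forall i, `|x1 0 i| < (1 + gamma) / 2 * K) -> (forall i, `|x2 0 i| < K) ->
  forall t, 0 <= t -> nrm2 (x1 t) (x2 t) <= K * expR (- (k * t)).
Proof.
have hg0 := Hg0. have hg1 := Hg1. have hb := Hb.
set c := (1 + gamma) / 2.
have c1 : c < 1 by rewrite /c; lra.
have cg : gamma < c by rewrite /c; lra.
have [dm dm0 dmle] := @dmin_spec R S A d Hd0.
pose mb := Num.min 1 beta.
have mb0 : 0 < mb by rewrite lt_min ltr01.
have mb1 : mb <= 1 by rewrite ge_min lexx.
have mbb : mb <= beta by rewrite ge_min lexx orbT.
pose a := 1 - c.
have a0 : 0 < a by rewrite /a; lra.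
pose k := dm * a * mb / 2.
have k0 : 0 < k by rewrite /k; apply: divr_gt0; [rewrite !mulr_gt0 | lra].
have hk1 : forall j, c * k < d j * (c - gamma).
  move=> j.
  have e1 : dm * a * mb <= dm * a * 1 by apply: ler_wpM2l => //; rewrite mulr_ge0 // ltW.
  have e2 : dm * a <= d j * a by apply: ler_wpM2r => //; apply: ltW.
  have e3 : 0 < d j * a by rewrite mulr_gt0.
  have e4 : c * k <= k by apply: ler_piMl; [apply: ltW | lra].
  have -> : c - gamma = a by rewrite /a /c; lra.
  rewrite /k in e4 *; lra.
have hk2 : forall j, k < beta * (d j * (1 - c)).
  move=> j.
  have e1 : dm * a * mb <= dm * a * beta by apply: ler_wpM2l => //; rewrite mulr_ge0 // ltW.
  have e2 : dm * a * beta <= d j * a * beta.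
    by apply: ler_wpM2r; [apply: ltW | apply: ler_wpM2r => //; apply: ltW].
  have e3 : 0 < d j * a * beta by rewrite !mulr_gt0.
  rewrite -/a mulrA mulrC /k; lra.
exists k => // x1 x2 [cx1 [cx2 dx]] K K0 h01 h02 t t0.
pose g (j : (S * A) + (S * A)) (u : R) : R :=
  match j with
  | inl i => c * K * expR (- (k * u)) - `|x1 u i|
  | inr i => K * expR (- (k * u)) - `|x2 u i|
  end.
have absb : forall x : R, - `|x| <= x /\ x <= `|x|.
  by move=> x; apply/andP; rewrite -ler_norml.
have gc : forall j, {within `[0,+oo[, continuous (g j)}.
  case=> i.
  - exact: (@wcc R _ (fun u => x1 u i) (@contB R (c*K) k) (cx1 i)).
  - exact: (@wcc R _ (fun u => x2 u i) (@contB R K k) (cx2 i)).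
have g0 : forall j, 0 < g j 0.
  case=> i /=; rewrite mulr0 oppr0 expR0 mulr1.
  - by have := h01 i; lra.
  - by have := h02 i; lra.
have gH : forall u, 0 < u -> (forall j, 0 <= g j u) -> forall j, g j u = 0 ->
   exists2 dl : R, 0 < dl & forall s, u - dl < s -> s < u -> g j s < 0.
  move=> u u0 hall j gj0.
  set E := expR (- (k * u)).
  have E0 : 0 < E := expR_gt0 _.
  have b1 : forall i, `|x1 u i| <= c * K * E.
    by move=> i; have := hall (inl i); rewrite /= -/E; lra.
  have b2 : forall i, `|x2 u i| <= K * E.
    by move=> i; have := hall (inr i); rewrite /= -/E; lra.
  have KE0 : 0 < K * E by rewrite mulr_gt0.
  have hPm : forall i, `|Pmul P (Mmax (x2 u)) i| <= K * E.
    move=> i; apply: Pmul_bound => // s; apply: Mmax_bound => //; exact: ltW.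
  case: j gj0 => i /= gj0.
  - have hx : `|x1 u i| = c * K * E by rewrite -/E in gj0; lra.
    have hPi := hPm i; have di := Hd0 i; have hk := hk1 i.
    have [dxi _] := dx u u0 i.
    move: hPi; set pm := Pmul _ _ i => hPi.
    have [p1 p1'] := absb pm.
    have p2 : gamma * (d i * pm) <= gamma * (d i * (K * E)).
      by apply: ler_wpM2l => //; apply: ler_wpM2l; [apply: ltW | lra].
    have p2' : gamma * (d i * - (K * E)) <= gamma * (d i * pm).
      by apply: ler_wpM2l => //; apply: ler_wpM2l; [apply: ltW | lra].
    have p3 : 0 < K * E * (d i * (c - gamma) - c * k) by rewrite mulr_gt0 // subr_gt0.
    case: (lerP 0 (x1 u i)) => sgn.
    + have xv : x1 u i = c * K * E by rewrite -hx ger0_norm.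
      have Hphi : is_derive u 1 (fun s => c * K * expR (- (k * s)) - x1 s i)
          (c * K * (E * - k) - h1 P d gamma (x1 u) (x2 u) i) :=
        is_deriveB (@derB R (c * K) k u) dxi.
      have lpos : 0 < c * K * (E * - k) - h1 P d gamma (x1 u) (x2 u) i.
        rewrite /h1 xv -/pm; lra.
      have [dl dl0 Hdl] := @deriv_pos_left R _ _ _ Hphi lpos ltac:(rewrite /= -/E xv; lra).
      exists dl => // s s1 s2; have := Hdl s s1 s2; have := absb (x1 s i); lra.
    + have xv : x1 u i = - (c * K * E) by rewrite -hx ltr0_norm // opprK.
      have Hphi : is_derive u 1 (fun s => c * K * expR (- (k * s)) + x1 s i)
          (c * K * (E * - k) + h1 P d gamma (x1 u) (x2 u) i) :=
        is_deriveD (@derB R (c * K) k u) dxi.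
      have lpos : 0 < c * K * (E * - k) + h1 P d gamma (x1 u) (x2 u) i.
        rewrite /h1 xv -/pm; lra.
      have [dl dl0 Hdl] := @deriv_pos_left R _ _ _ Hphi lpos ltac:(rewrite /= -/E xv; lra).
      exists dl => // s s1 s2; have := Hdl s s1 s2; have := absb (x1 s i); lra.
  - have hx : `|x2 u i| = K * E by rewrite -/E in gj0; lra.
    have di := Hd0 i; have hk := hk2 i.
    have [_ dxi] := dx u u0 i.
    have [q1 q1'] := absb (x1 u i).
    have bi := b1 i.
    have p2 : beta * (d i * x1 u i) <= beta * (d i * (c * K * E)).
      by apply: ler_wpM2l; [apply: ltW | apply: ler_wpM2l; [apply: ltW | lra]].
    have p2' : beta * (d i * - (c * K * E)) <= beta * (d i * x1 u i).
      by apply: ler_wpM2l; [apply: ltW | apply: ler_wpM2l; [apply: ltW | lra]].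
    have p3 : 0 < K * E * (beta * (d i * (1 - c)) - k) by rewrite mulr_gt0 // subr_gt0.
    case: (lerP 0 (x2 u i)) => sgn.
    + have xv : x2 u i = K * E by rewrite -hx ger0_norm.
      have Hphi : is_derive u 1 (fun s => K * expR (- (k * s)) - x2 s i)
          (K * (E * - k) - h2 d beta (x1 u) (x2 u) i) :=
        is_deriveB (@derB R K k u) dxi.
      have lpos : 0 < K * (E * - k) - h2 d beta (x1 u) (x2 u) i.
        rewrite /h2 xv; lra.
      have [dl dl0 Hdl] := @deriv_pos_left R _ _ _ Hphi lpos ltac:(rewrite /= -/E xv; lra).
      exists dl => // s s1 s2; have := Hdl s s1 s2; have := absb (x2 s i); lra.
    + have xv : x2 u i = - (K * E) by rewrite -hx ltr0_norm // opprK.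
      have Hphi : is_derive u 1 (fun s => K * expR (- (k * s)) + x2 s i)
          (K * (E * - k) + h2 d beta (x1 u) (x2 u) i) :=
        is_deriveD (@derB R K k u) dxi.
      have lpos : 0 < K * (E * - k) + h2 d beta (x1 u) (x2 u) i.
        rewrite /h2 xv; lra.
      have [dl dl0 Hdl] := @deriv_pos_left R _ _ _ Hphi lpos ltac:(rewrite /= -/E xv; lra).
      exists dl => // s s1 s2; have := Hdl s s1 s2; have := absb (x2 s i); lra.
have key := @first_hit R _ g gc g0 gH t t0.
have E0 : 0 < expR (- (k * t)) := expR_gt0 _.
have KE0 : 0 < K * expR (- (k * t)) by rewrite mulr_gt0.
have cKE : c * (K * expR (- (k * t))) <= K * expR (- (k * t)).
  by apply: ler_piMl; [apply: ltW | lra].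
apply: nrm2_le; first exact: ltW.
- by move=> i; have := key (inl i); rewrite /=; lra.
- by move=> i; have := key (inr i); rewrite /=; lra.
Qed.
End Decay.

Arguments nrm2_ge1 {R S A}.
Arguments nrm2_ge2 {R S A}.
Arguments nrm2_le {R S A}.
Arguments Mmax_bound {R S A}.
Arguments Pmul_bound {R S A}.

Theorem mainTheorem10 (R : realType) (S A : finType)
    (P : S * A -> S -> R) (d : S * A -> R) (gamma : R)
    (HP0 : forall i s', 0 <= P i s')
    (HP1 : forall i, \sum_(s' : S) P i s' = 1)
    (Hd0 : forall i, 0 < d i)
    (Hd1 : \sum_(i : S * A) d i = 1)
    (Hg0 : 0 <= gamma) (Hg1 : gamma < 1) :
  forall beta : R, 0 < beta ->
    is_equilibrium P d gamma beta (fun _ => 0) (fun _ => 0) /\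
    (forall z1 z2, is_equilibrium P d gamma beta z1 z2 ->
       z1 = (fun _ => 0) /\ z2 = (fun _ => 0)) /\
    origin_GAS P d gamma beta.
Proof.
move=> beta Hb.
have P0 : forall i, Pmul P (Mmax (fun _ : S * A => 0)) i = 0.
  move=> i; rewrite /Pmul big1 // => s' _; by rewrite Mmax0 mulr0.
split.
  split => i; rewrite /h1 /h2 ?P0 !mulr0 ?subrr //; by rewrite oppr0 add0r.
split.
  move=> z1 z2 [e1 e2].
  have z12 : forall i, z1 i = z2 i.
    move=> i; have := e2 i; rewrite /h2 => /eqP; rewrite subr_eq0 => /eqP.
    by move/(mulfI (lt0r_neq0 Hb)); move/(mulfI (lt0r_neq0 (Hd0 i))).
  have mz : nrm2 z1 z2 <= gamma * nrm2 z1 z2.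
    have m0 := nrm2_ge0 z1 z2.
    have hz1 : forall i, `|z1 i| <= gamma * nrm2 z1 z2.
      move=> i; have := e1 i; rewrite /h1.
      set pm := Pmul _ _ i => e.
      have hpm : `|pm| <= nrm2 z1 z2.
        apply: Pmul_bound => // s; apply: Mmax_bound => // j; exact: nrm2_ge2.
      have ez : d i * (z1 i - gamma * pm) = 0 by rewrite mulrBr; lra.
      move/eqP: ez; rewrite mulf_eq0 gt_eqF //= subr_eq0 => /eqP ->.
      by rewrite normrM ger0_norm //; apply: ler_wpM2l.
    apply: nrm2_le; first exact: mulr_ge0.
      exact: hz1.
    by move=> i; rewrite -z12.
  have hm : nrm2 z1 z2 <= 0.
    have m0 := nrm2_ge0 z1 z2.
    have hg := Hg1; nra.
  by split; apply/funext => i; apply/eqP; rewrite -normr_le0;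
    [apply: le_trans (nrm2_ge1 _ _ i) hm | apply: le_trans (nrm2_ge2 _ _ i) hm].
have [k k0 Hdec] := @decay R S A P d gamma beta HP0 HP1 Hd0 Hg0 Hg1 Hb.
have hg0 := Hg0; have hg1 := Hg1.
set c := (1 + gamma) / 2.
have c0 : 0 < c by rewrite /c; lra.
have c1 : c <= 1 by rewrite /c; lra.
split.
  move=> eps eps0; exists (c * eps / 2); first by rewrite divr_gt0 // mulr_gt0.
  move=> x1 x2 sol hd t t0.
  set m0 := nrm2 (x1 0) (x2 0) in hd *.
  have m00 : 0 <= m0 := nrm2_ge0 _ _.
  pose K := m0 / c + eps / 4.
  have mc1 : m0 <= m0 / c by rewrite ler_pdivlMr // ler_piMr.
  have mc2 : m0 / c < eps / 2 by rewrite ltr_pdivrMr //; lra.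
  have cK : c * K = m0 + c * (eps / 4).
    by rewrite /K mulrDr mulrCA mulfV ?gt_eqF // mulr1.
  have K0 : 0 < K by rewrite /K; lra.
  have ce : 0 < c * (eps / 4) by rewrite mulr_gt0 //; lra.
  have := Hdec x1 x2 sol K K0.
  have h01 : forall i, `|x1 0 i| < (1 + gamma) / 2 * K.
    by move=> i; rewrite -/c cK; have := nrm2_ge1 (x1 0) (x2 0) i; rewrite -/m0; lra.
  have h02 : forall i, `|x2 0 i| < K.
    by move=> i; have := nrm2_ge2 (x1 0) (x2 0) i; rewrite -/m0 /K; lra.
  move=> /(_ h01 h02 t t0) H.
  have e1 : expR (- (k * t)) <= 1 by rewrite expR_le1 oppr_le0 mulr_ge0 // ltW.
  have : K * expR (- (k * t)) <= K by rewrite ler_piMr // ltW.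
  have KK : K = m0 / c + eps / 4 by [].
  lra.
move=> x1 x2 sol.
set m0 := nrm2 (x1 0) (x2 0).
have m00 : 0 <= m0 := nrm2_ge0 _ _.
pose K := m0 / c + 1.
have mc1 : m0 <= m0 / c by rewrite ler_pdivlMr // ler_piMr.
have cK : c * K = m0 + c.
  by rewrite /K mulrDr mulrCA mulfV ?gt_eqF // mulr1 mulr1.
have K0 : 0 < K by rewrite /K; lra.
have h01 : forall i, `|x1 0 i| < (1 + gamma) / 2 * K.
  by move=> i; rewrite -/c cK; have := nrm2_ge1 (x1 0) (x2 0) i; rewrite -/m0; lra.
have h02 : forall i, `|x2 0 i| < K.
  by move=> i; have := nrm2_ge2 (x1 0) (x2 0) i; rewrite -/m0 /K; lra.
have H := Hdec x1 x2 sol K K0 h01 h02.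
apply/cvgrPdist_le => e e0.
exists (K / (e * k)); split; first exact: num_real.
move=> t tM.
have ek : 0 < e * k by rewrite mulr_gt0.
have Me : 0 <= K / (e * k) by rewrite divr_ge0 // ltW.
have t0 : 0 <= t by lra.
have Ht := H t t0.
have n0 := nrm2_ge0 (x1 t) (x2 t).
rewrite sub0r normrN ger0_norm //.
apply: le_trans Ht _.
rewrite expRN ler_pdivrMr ?expR_gt0 //.
have := expR_ge1Dx (k * t).
have : K < t * (e * k) by rewrite -ltr_pdivrMr.
nra.
Qed.
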